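(* Let $X$ be a finite simple graph, $\pi\in S_X$, and $\phi\in\{\mathbf{F}^\updownarrow_\pi,\mathbf{F}^\uparrow_\pi,\mathbf{F}^\downarrow_\pi\}$. If for a state $s\in\mathcal{S}$ the transition $s\mapsto\phi(s)$ is unidirectional, then every transition $\phi^t(s)\mapsto\phi^{t+1}(s)$, $t\ge 0$, along the forward orbit of $s$ is unidirectional and in the same direction as that of $s\mapsto\phi(s)$.
   Context: Let $X$ be a finite simple graph with vertices $1,\dots,n$; $d(v)$ is the degree of $v$ and $n[v]$ the closed neighborhood of $v$. An extended vertex state is $s_v=(x_v,k_v)\in\{0,1\}\times\{1,\dots,d(v)+1\}$; $\mathcal{S}$ is the product of these sets. Let $\sigma(x[v])=|\{u\in n[v]:x_u=1\}|$. All vertex functions set $x_v'=1$ iff $\sigma(x[v])\ge k_v$ (else $0$). Increasing ($\uparrow$): $k_v'=k_v+1$ if $x_v=0$ and $\sigma(x[v])\ge k_v$, else $k_v$. Decreasing ($\downarrow$): $k_v'=k_v-1$ if $x_v=1$ and $\sigma(x[v])<k_v$, else $k_v$. Mixed ($\updownarrow$): both of these changes, $k_v$ unchanged otherwise. The local map $F^\star_v$ updates only coordinate $v$; for a permutation $\pi=(\pi_1,\dots,\pi_n)$, $\mathbf{F}^\star_\pi=F^\star_{\pi_n}\circ\cdots\circ F^\star_{\pi_1}$. A transition $(x,k)\mapsto(x',k')$ is unidirectional if either all vertices $v$ with $x_v\ne x'_v$ satisfy $x_v=0,x_v'=1$, or all such vertices satisfy $x_v=1,x_v'=0$. *)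

(* Defs.v *)
From mathcomp Require Import all_boot all_fingroup.
Set Implicit Arguments. Unset Strict Implicit. Unset Printing Implicit Defensive.

Definition simple_graph (n : nat) (e : rel 'I_n) : Prop :=
  symmetric e /\ irreflexive e.

Definition deg n (e : rel 'I_n) (v : 'I_n) : nat := #|[set u | e v u]|.

(* extended state: s v = (x_v, k_v) *)
Definition state n := 'I_n -> bool * nat.

Definition valid_state n (e : rel 'I_n) (s : state n) : Prop :=
  forall v, 1 <= (s v).2 <= deg e v + 1.

Definition sigma n (e : rel 'I_n) (s : state n) (v : 'I_n) : nat :=
  #|[set u | ((u == v) || e v u) && (s u).1]|.

Inductive mode := Mixed | Increasing | Decreasing.

Definition vertex_fun n (e : rel 'I_n) (m : mode) (s : state n) (v : 'I_n)
  : bool * nat :=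
  let x := (s v).1 in let k := (s v).2 in
  let sg := sigma e s v in
  let x' := k <= sg in
  let inc := ~~ x && (k <= sg) in
  let dec := x && (sg < k) in
  let k' := match m with
            | Increasing => if inc then k.+1 else k
            | Decreasing => if dec then k.-1 else k
            | Mixed => if inc then k.+1 else if dec then k.-1 else k
            end in
  (x', k').

Definition local_map n (e : rel 'I_n) (m : mode) (v : 'I_n) (s : state n)
  : state n :=
  fun u => if u == v then vertex_fun e m s v else s u.

(* F_pi = F_{pi_n} o ... o F_{pi_1} : apply F_{pi 0} first *)
Definition seq_map n (e : rel 'I_n) (m : mode) (pi : 'S_n) (s : state n)
  : state n :=
  foldl (fun s' v => local_map e m v s') s [seq pi i | i <- enum 'I_n].

Definition up_trans n (s s' : state n) : Prop :=
  forall v, (s v).1 != (s' v).1 -> ~~ (s v).1 && (s' v).1.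
Definition down_trans n (s s' : state n) : Prop :=
  forall v, (s v).1 != (s' v).1 -> (s v).1 && ~~ (s' v).1.
Definition unidirectional n (s s' : state n) : Prop :=
  up_trans s s' \/ down_trans s s'.

(* Main.v *)
Require Import Defs.
From mathcomp Require Import all_boot all_fingroup.
From mathcomp Require Import zify.
Set Implicit Arguments. Unset Strict Implicit. Unset Printing Implicit Defensive.

Definition run n (e : rel 'I_n) (m : mode) (l : seq 'I_n) (s : state n) : state n :=
  foldl (fun s' v => local_map e m v s') s l.

Lemma idx_cons (T : eqType) (a u : T) l :
  index u (a :: l) = if a == u then 0 else (index u l).+1.
Proof. by []. Qed.

Section Main.
Variables (n : nat) (e : rel 'I_n) (m : mode).

Lemma run_notin l s v : v \notin l -> run e m l s v = s v.
Proof.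
elim: l s => [|a l IH] s //=; rewrite in_cons negb_or => /andP[va vl].
by rewrite IH // /local_map (negbTE va).
Qed.

Lemma vf_ext s s' v : (forall u, s u = s' u) ->
  vertex_fun e m s v = vertex_fun e m s' v.
Proof.
move=> H.
have Hs : sigma e s v = sigma e s' v.
  by rewrite /sigma; apply: eq_card => u; rewrite !inE H.
by rewrite /vertex_fun Hs H.
Qed.

Lemma run_char l s v : uniq l -> v \in l ->
  run e m l s v = vertex_fun e m
    (fun u => if index u l < index v l then run e m l s u else s u) v.
Proof.
elim: l s => [|a l IH] s // /andP[anl ul].
change (run e m (a::l) s) with (run e m l (local_map e m a s)).
rewrite in_cons => /orP[/eqP-> | vl].
  rewrite run_notin // /local_map eqxx; apply: vf_ext => u.
  by rewrite (idx_cons a a) eqxx ltn0.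
have va : a != v by apply/eqP => av; rewrite av vl in anl.
rewrite IH //; apply: vf_ext => u.
rewrite !idx_cons (negbTE va) ltnS.
case: (eqVneq a u) => [<- | au] /=.
  rewrite (memNindex anl) ltnNge ltnW ?index_mem //= run_notin //.
by rewrite /local_map eq_sym (negbTE au).
Qed.

Variables (l : seq 'I_n) (ul : uniq l) (lall : forall v, v \in l).

Lemma up_step s0 s1 s2 : s1 = run e m l s0 -> s2 = run e m l s1 ->
  up_trans s0 s1 -> up_trans s1 s2.
Proof.
move=> E1 E2 Hup.
suff H : forall i v, index v l = i -> (s1 v).1 -> (s2 v).1.
  move=> v; case A1: (s1 v).1; case A2: (s2 v).1 => //=.
  by have := H _ v erefl A1; rewrite A2.
elim/ltn_ind => i IHi v Hi x1; subst i.
pose mix1 := fun u => if index u l < index v l then s1 u else s0 u.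
pose mix2 := fun u => if index u l < index v l then s2 u else s1 u.
have c1 : s1 v = vertex_fun e m mix1 v by rewrite /mix1 E1; apply: run_char.
have c2 : s2 v = vertex_fun e m mix2 v by rewrite /mix2 E2; apply: run_char.
have m1v : mix1 v = s0 v by rewrite /mix1 ltnn.
have m2v : mix2 v = s1 v by rewrite /mix2 ltnn.
have mono : forall u, (mix1 u).1 -> (mix2 u).1.
  move=> u; rewrite /mix1 /mix2; case: ifP => hu.
    exact: (IHi _ hu u erefl).
  move=> h0; case E: (s1 u).1 => //.
  by have := Hup u; rewrite h0 E; move/(_ isT).
have sub : [set u | ((u == v) || e v u) && (mix1 u).1] \subset
           [set u | ((u == v) || e v u) && (mix2 u).1].
  apply/subsetP => u; rewrite !inE => /andP[h1 h2]; by rewrite h1 (mono _ h2).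
have le12 : sigma e mix1 v <= sigma e mix2 v by apply: subset_leq_card.
have x1c := x1.
rewrite c2 /vertex_fun /= m2v.
move: x1; rewrite c1 /vertex_fun /= m1v => x1.
case X0: (s0 v).1.
  by case: m => /=; rewrite ?ltnNge ?x1 /=; apply: leq_trans le12.
have lt12 : sigma e mix1 v < sigma e mix2 v.
  apply: proper_card; apply/properP; split => //; exists v;
    by rewrite !inE eqxx /= ?m1v ?m2v ?X0 ?x1c.
by case: m => /=; try case: ifP; lia.
Qed.

Lemma down_step s0 s1 s2 : s1 = run e m l s0 -> s2 = run e m l s1 ->
  down_trans s0 s1 -> down_trans s1 s2.
Proof.
move=> E1 E2 Hdn.
suff H : forall i v, index v l = i -> (s2 v).1 -> (s1 v).1.
  move=> v; case A1: (s1 v).1; case A2: (s2 v).1 => //=.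
  by have := H _ v erefl A2; rewrite A1.
elim/ltn_ind => i IHi v Hi x2; subst i.
pose mix1 := fun u => if index u l < index v l then s1 u else s0 u.
pose mix2 := fun u => if index u l < index v l then s2 u else s1 u.
have c1 : s1 v = vertex_fun e m mix1 v by rewrite /mix1 E1; apply: run_char.
have c2 : s2 v = vertex_fun e m mix2 v by rewrite /mix2 E2; apply: run_char.
have m1v : mix1 v = s0 v by rewrite /mix1 ltnn.
have m2v : mix2 v = s1 v by rewrite /mix2 ltnn.
have mono : forall u, (mix2 u).1 -> (mix1 u).1.
  move=> u; rewrite /mix1 /mix2; case: ifP => hu.
    exact: (IHi _ hu u erefl).
  move=> h0; case E: (s0 u).1 => //.
  by have := Hdn u; rewrite h0 E; move/(_ isT).
have sub : [set u | ((u == v) || e v u) && (mix2 u).1] \subset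
           [set u | ((u == v) || e v u) && (mix1 u).1].
  apply/subsetP => u; rewrite !inE => /andP[h1 h2]; by rewrite h1 (mono _ h2).
have le12 : sigma e mix2 v <= sigma e mix1 v by apply: subset_leq_card.
case A1: (s1 v).1 => //.
have A1c := A1.
move: x2; rewrite c2 /vertex_fun /= m2v => x2.
move: A1 x2; rewrite c1 /vertex_fun /= m1v => A1 x2.
case X0: (s0 v).1.
  have lt12 : sigma e mix2 v < sigma e mix1 v.
    apply: proper_card; apply/properP; split => //; exists v;
      by rewrite !inE eqxx /= ?m1v ?m2v ?X0 ?A1c.
  move: x2 A1; case: m => /=; rewrite ?X0 /=; try case: ifP; try case: ifP; lia.
move: x2 A1; case: m => /=; rewrite ?X0 /=; try case: ifP; try case: ifP; lia.
Qed.

End Main.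

Theorem proposition3p9 (n : nat) (e : rel 'I_n) (pi : 'S_n) (m : mode)
  (s : state n) :
  simple_graph e -> valid_state e s ->
  unidirectional s (seq_map e m pi s) ->
  (up_trans s (seq_map e m pi s) ->
     forall t, up_trans (iter t (seq_map e m pi) s)
                        (iter t.+1 (seq_map e m pi) s)) /\
  (down_trans s (seq_map e m pi s) ->
     forall t, down_trans (iter t (seq_map e m pi) s)
                          (iter t.+1 (seq_map e m pi) s)).
Proof.
move=> _ _ _.
pose l := [seq pi i | i <- enum 'I_n].
have ul : uniq l by rewrite map_inj_uniq ?enum_uniq //; apply: perm_inj.
have lall : forall v, v \in l.
  move=> v; apply/mapP; exists (pi^-1 v)%g; first by rewrite mem_enum.
  by rewrite permKV.
have E : forall s', seq_map e m pi s' = run e m l s' by [].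
split => H t; elim: t => [|t IH] //.
  exact: (up_step ul lall (E _) (E _) IH).
exact: (down_step ul lall (E _) (E _) IH).
Qed.
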